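(* Let $q$ be a prime power and $\epsilon>0$. There is a constant $C=C(q,\epsilon)$ such that the following holds for every positive integer $n$: let $Z$ be a random vector in $\mathbb{F}_q^n$, let $m$ be a positive integer with $m\le H_\infty(Z)-n\epsilon$, let $\mathcal{C}$ be uniform over the set $\mathscr{C}$ of all $[n,n-m]_q$ linear codes, and let $H$ be a parity-check matrix of $\mathcal{C}$ (an $m\times n$ rank-$m$ matrix with kernel $\mathcal{C}$). Then $$\mathbb{E}_{\mathcal{C}\sim\mathscr{C}}\big[\|q^mP_{HZ}\|_\infty\big]\le C.$$
   Context: $H_\infty(Z)=\min_x(-\log_qP_Z(x))$ is the min-entropy (base $q$). $\|f\|_\infty=\max_x|f(x)|$. $P_{HZ}$ is the distribution of $HZ$ on $\mathbb{F}_q^m$ for fixed $\mathcal{C}$. *)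

(* Defs.v *)
From HB Require Import structures.
From mathcomp Require Import all_boot all_order all_algebra all_field.
From mathcomp Require Import reals constructive_ereal exp.
Set Implicit Arguments. Unset Strict Implicit. Unset Printing Implicit Defensive.
Import Order.TTheory GRing.Theory Num.Theory.
Local Open Scope ring_scope.

Section Defs.
Variables (F : finFieldType) (R : realType).

Definition is_distr (T : finType) (P : {ffun T -> R}) : Prop :=
  (forall x, 0 <= P x) /\ \sum_(x : T) P x = 1.

Definition min_entropy (T : finType) (P : {ffun T -> R}) : \bar R :=
  \big[Order.min/+oo%E]_(x : T | 0 < P x) ((- ln (P x) / ln (#|F|%:R : R))%:E).

Definition linear_codes (n k : nat) : {set {set 'rV[F]_n}} :=
  [set C : {set 'rV[F]_n} | [exists G : 'M[F]_(k, n),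
     (\rank G == k) && (C == [set x : 'rV[F]_n | (x <= G)%MS])]].

Definition parity_check (n m : nat) (C : {set 'rV[F]_n}) (H : 'M[F]_(m, n)) : Prop :=
  \rank H = m /\ forall x : 'rV[F]_n, (x \in C) = (H *m x^T == 0).

Definition distr_HZ (n m : nat) (H : 'M[F]_(m, n)) (P : {ffun 'rV[F]_n -> R})
  (y : 'cV[F]_m) : R :=
  \sum_(x : 'rV[F]_n | H *m x^T == y) P x.

Definition sup_norm (T : finType) (f : T -> R) : R :=
  \big[Num.max/0]_(t : T) `|f t|.

End Defs.

(* Main.v *)
Require Import Defs.
From HB Require Import structures.
From mathcomp Require Import all_boot all_order all_algebra all_field.
From mathcomp Require Import reals constructive_ereal exp.
From mathcomp Require Import ring lra.
Import Order.TTheory GRing.Theory Num.Theory.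
Local Open Scope ring_scope.

Module Aux.
Set Implicit Arguments. Unset Strict Implicit. Unset Printing Implicit Defensive.

Section LinAlg.
Variable F : finFieldType.
Local Notation q := #|F|.

Lemma card_rowfree (r k : nat) :
  #|[set A : 'M[F]_(r, k) | \rank A == r]| = (\prod_(i < r) (q ^ k - q ^ i))%N.
Proof.
elim: r => [|r IHr].
  rewrite big_ord0 (@eq_card1 _ (0 : 'M_(0, k))) // => A.
  by rewrite !inE flatmx0 mxrank.unlock !eqxx.
pose fr m := [pred A : 'M[F]_(m, k) | \rank A == m].
have cE m : #|[set A : 'M[F]_(m, k) | \rank A == m]| = #|fr m|.
  by apply: eq_card => A; rewrite !inE.
rewrite big_ord_recr /= -IHr !cE.
rewrite -[#|fr r.+1|]sum1_card -[#|fr r|]sum1_card.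
rewrite -add1n.
rewrite (partition_big dsubmx (fr r)) /= => [|A]; last first.
  rewrite !inE -{1}(vsubmxK A); move: {A}(_ A) (_ A) => Ad Au Afull.
  rewrite eqn_leq rank_leq_row -(leq_add2l (\rank Au)) -mxrank_sum_cap.
  rewrite {1 3}[@mxrank]lock addsmxE (eqnP Afull) -lock -addnA.
  by rewrite leq_add ?rank_leq_row ?leq_addr.
rewrite big_distrl /=; apply: eq_bigr => A rAm; rewrite mul1n.
rewrite (reindex (col_mx^~ A)) /=; last first.
  exists usubmx => [v _ | vA]; first by rewrite col_mxKu.
  by case/andP=> _ /eqP <-; rewrite vsubmxK.
transitivity #|~: [set v *m A | v in 'rV_r]|; last first.
  rewrite cardsCs setCK card_imset ?card_mx ?card_ord ?mul1n //.
  have [B AB1] := row_freeP rAm; apply: can_inj (mulmx^~ B) _ => v.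
  by rewrite -mulmxA AB1 mulmx1.
rewrite sum1_card; apply: eq_card => v; rewrite unfold_in /= col_mxKd eqxx inE.

rewrite andbT eqn_leq rank_leq_row /= -(leq_add2r (\rank (v :&: A)%MS)).
rewrite -addsmxE mxrank_sum_cap (eqnP rAm) addnAC leq_add2r.
rewrite (ltn_leqif (mxrank_leqif_sup _)) ?capmxSl // sub_capmx submx_refl.

by rewrite inE; congr (~~ _); apply/submxP/imsetP=> [] [u]; exists u.
Qed.
End LinAlg.

Section LinAlg2.
Variable F : finFieldType.
Local Notation q := #|F|.
Variables n d : nat.
Local Notation codes := (linear_codes F n d).

Definition contm (C : {set 'rV[F]_n}) r (V : 'M[F]_(r, n)) := [forall i, row i V \in C].

Lemma code_gen C : C \in codes ->
  exists G : 'M[F]_(d, n), \rank G = d /\ C = [set x | (x <= G)%MS].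
Proof.
by rewrite inE => /existsP [G /andP [/eqP rG /eqP ->]]; exists G.
Qed.

Lemma contm_gen (G : 'M[F]_(d, n)) r (V : 'M[F]_(r, n)) :
  contm [set x | (x <= G)%MS] V = (V <= G)%MS.
Proof.
apply/forallP/row_subP => H i; move: (H i); by rewrite inE.
Qed.

Lemma sym_le r (V1 V2 : 'M[F]_(r, n)) : \rank V1 = r -> \rank V2 = r ->
  (#|[set C in codes | contm C V1]| <= #|[set C in codes | contm C V2]|)%N.
Proof.
move=> r1 r2.
pose U1 := row_ebase V1; pose U2 := row_ebase V2.
pose A := invmx U1 *m U2.
have Au : A \in unitmx by rewrite unitmx_mul unitmx_inv !row_ebase_unit.
have Af : row_free A by rewrite row_free_unit.
have e1 : V1 *m A = col_ebase V1 *m (pid_mx r *m U2).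
  rewrite -{1}(mulmx_ebase V1) r1 /A -!mulmxA mulKVmx ?row_ebase_unit //.
have e2 : V2 = col_ebase V2 *m (pid_mx r *m U2).
  by rewrite -{1}(mulmx_ebase V2) r2 -!mulmxA.
have L1f : row_full (col_ebase V1) by rewrite row_full_unit col_ebase_unit.
have L2f : row_full (col_ebase V2) by rewrite row_full_unit col_ebase_unit.
pose f (C : {set 'rV[F]_n}) := [set x *m A | x in C].
have fG (G : 'M[F]_(d, n)) : f [set x | (x <= G)%MS] = [set y | (y <= G *m A)%MS].
  apply/setP => y; rewrite inE; apply/imsetP/idP.
    by case=> x; rewrite inE => xG ->; rewrite submxMr.
  move=> yG; exists (y *m invmx A); last by rewrite mulmxKV.
  by rewrite inE -(mulmxK Au G) submxMr.
rewrite -(card_imset _ (imset_inj (can_inj (fun x => mulmxK Au x)))).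
apply: subset_leq_card; apply/subsetP => C' /imsetP [C].
rewrite inE => /andP [Cc CV] ->{C'}.
have [G [rG eC]] := code_gen Cc.
rewrite inE; subst C.
have -> : [set x *m A | x in [set x | (x <= G)%MS]] = [set y | (y <= G *m A)%MS] := fG G.
apply/andP; split.
  rewrite inE; apply/existsP; exists (G *m A); rewrite mxrankMfree // rG eqxx /=.
  by [].
by rewrite contm_gen e2 (eqmxMfull _ L2f) -(eqmxMfull _ L1f) -e1 submxMfree // -contm_gen.
Qed.

Definition rowfree r k := [set A : 'M[F]_(r, k) | \rank A == r].

Lemma card_in_code (G : 'M[F]_(d, n)) r : \rank G = d ->
  #|[set V : 'M[F]_(r, n) | (\rank V == r) && (V <= G)%MS]| = #|rowfree r d|.
Proof.
move=> rG.
have Gf : row_free G by rewrite /row_free rG.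
have [B GB1] := row_freeP Gf.
have inj : injective (fun X : 'M[F]_(r, d) => X *m G).
  by apply: can_inj (mulmx^~ B) _ => v; rewrite -mulmxA GB1 mulmx1.
rewrite -(card_imset _ inj); apply: eq_card => V; rewrite inE.
apply/andP/imsetP.
  move=> [rV /submxP [X eX]]; exists X => //.
  by move: rV; rewrite eX inE mxrankMfree.
move=> [X]; rewrite inE => /eqP rX ->.
by rewrite mxrankMfree // rX eqxx submxMl.
Qed.

Lemma card_setsum (I : finType) (A : {set I}) (Pp : pred I) :
  #|[set x in A | Pp x]| = (\sum_(x in A) (Pp x : nat))%N.
Proof.
rewrite -sum1_card (eq_bigl (fun x => (x \in A) && Pp x)); last by move=> x; rewrite inE.

by rewrite big_mkcondr /=; apply: eq_bigr => x _; case: (Pp x).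
Qed.

Lemma dcount (I J : finType) (A : {set I}) (B : {set J}) (Rr : I -> J -> bool) :
 (\sum_(a in A) #|[set b in B | Rr a b]| = \sum_(b in B) #|[set a in A | Rr a b]|)%N.
Proof.
rewrite (eq_bigr (fun a => \sum_(b in B) (Rr a b : nat))%N); last by move=> a _; rewrite card_setsum.
rewrite exchange_big /=; apply: eq_bigr => b _; by rewrite card_setsum.
Qed.

Lemma K1 r (V : 'M[F]_(r, n)) : \rank V = r ->
  (#|[set C in codes | contm C V]| * #|rowfree r n| = #|codes| * #|rowfree r d|)%N.
Proof.
move=> rV.
have := dcount (rowfree r n) codes (fun V' C => contm C V').
rewrite (eq_bigr (fun _ => #|[set C in codes | contm C V]|)); last first.
  move=> V'; rewrite inE => /eqP rV'; apply/eqP; rewrite eqn_leq.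
  by rewrite !sym_le.
rewrite sum_nat_const mulnC => ->.
rewrite -sum_nat_const; apply: eq_bigr => C Cc.
have [G [rG eC]] := code_gen Cc.
rewrite -(card_in_code r rG); apply: eq_card => V'; rewrite !inE eC contm_gen.
by [].
Qed.


Lemma codes_K (m s : nat) (V : 'M[F]_(s, n)) : (d + m = n)%N ->
  (#|[set C in codes | contm C V]| * q ^ (m * \rank V) <= #|codes|)%N.
Proof.
move=> dmn; set r := \rank V.
pose W := row_base V.
have rW : \rank W = r by apply/eqP; exact: row_base_free.
have -> : [set C in codes | contm C V] = [set C in codes | contm C W].
  apply/setP => C; rewrite in_set [RHS]in_set; case Cc: (C \in codes) => //=.
  have [G [_ ->]] := code_gen Cc.
  by rewrite !contm_gen eq_row_base.
have q1 : (1 < q)%N := finNzRing_gt1 F.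
have rn : (r <= n)%N by rewrite /r rank_leq_col.
have Npos : (0 < #|rowfree r n|)%N.
  rewrite card_rowfree prodn_gt0 // => i.
  by rewrite subn_gt0 ltn_exp2l // (leq_trans (ltn_ord i)).

rewrite -(leq_pmul2r Npos) mulnAC K1 // -mulnA leq_mul2l; apply/orP; right.
rewrite !card_rowfree mulnC expnM.
have -> : ((q ^ m) ^ r = \prod_(i < r) q ^ m)%N by rewrite prod_nat_const card_ord.
rewrite -big_split /=.
apply: leq_prod => i _.
rewrite mulnBr -!expnD (addnC m) dmn addnC.
by apply: leq_sub2l; rewrite leq_pexp2l ?leq_addr // ltnW.
Qed.

End LinAlg2.

Lemma lemM2l (R : numDomainType) (x y z : R) : 0 <= x -> y <= z -> x * y <= x * z.
Proof. by move=> x0 yz; apply: ler_wpM2l. Qed.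

Section Prob.
Variables (R : realType) (F : finFieldType) (n : nat) (P : {ffun 'rV[F]_n -> R}).
Local Notation Q := (#|F|%:R : R).

Definition Mx (K : nat) (s : seq 'rV[F]_n) : 'M[F]_(K, n) :=
  \matrix_(i < K) (if (i < size s)%N then nth 0 s i - head 0 s else 0).

Fixpoint Tf (K : nat) (a : R) (j : nat) (s : seq 'rV[F]_n) : R :=
  match j with
  | 0 => a ^+ \rank (Mx K s)
  | j'.+1 => \sum_x P x * Tf K a j' (rcons s x)
  end.

Lemma Mx_sub K s x : (size s < K)%N -> s != [::] ->
  (Mx K s <= Mx K (rcons s x))%MS /\ (x - head 0 s <= Mx K (rcons s x))%MS.
Proof.
move=> sK s0.
have hd : head 0 (rcons s x) = head 0 s by case: s s0 sK.
split.
  apply/row_subP => i; rewrite rowK.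
  case: ifP => ilt; last by rewrite sub0mx.
  have -> : nth 0 s i - head 0 s = row i (Mx K (rcons s x)).
    by rewrite rowK size_rcons ltnS ltnW // nth_rcons ilt hd.
  exact: row_sub.
have -> : x - head 0 s = row (Ordinal sK) (Mx K (rcons s x)).
  by rewrite rowK /= size_rcons ltnSn nth_rcons ltnn eqxx hd.
exact: row_sub.
Qed.

Lemma card_span K (M : 'M[F]_(K, n)) (h : 'rV[F]_n) :
  (#|[set x : 'rV[F]_n | ((x - h)%R <= M)%MS]| <= #|F| ^ K)%N.
Proof.
apply: leq_trans (_ : #|[set (c *m M + h)%R | c in 'rV[F]_K]| <= _)%N.
  apply: subset_leq_card; apply/subsetP => x; rewrite inE => /submxP [c e].
  by apply/imsetP; exists c => //; rewrite -e subrK.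
apply: leq_trans (leq_imset_card _ _) _.
by rewrite cardT -cardE card_mx mul1n.
Qed.

Hypotheses (P0 : forall x, 0 <= P x) (P1 : \sum_x P x = 1).

Lemma T_step K a rho s : (size s < K)%N -> s != [::] ->
  (forall x, P x <= rho) -> 0 <= a -> a <= 1 ->
  \sum_x P x * a ^+ \rank (Mx K (rcons s x)) <= (rho * Q ^+ K + a) * a ^+ \rank (Mx K s).
Proof.
move=> sK s0 hr a0 a1.
set r := \rank (Mx K s).
rewrite (bigID (fun x => (x - head 0 s <= Mx K s)%MS)) /= mulrDl.
apply: lerD.
  apply: le_trans (_ : \sum_(x | (x - head 0 s <= Mx K s)%MS) rho * a ^+ r <= _).
    apply: ler_sum => x _; apply: ler_pM => //; first exact: exprn_ge0.
    apply: ler_wiXn2l => //; have [le _] := Mx_sub x sK s0.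
    exact: mxrank_leqif_sup le.
  rewrite sumr_const -[rho * _ *+ _]mulr_natr mulrAC.
  have rho0 : 0 <= rho by apply: le_trans (hr 0).
  apply: ler_pM; rewrite ?exprn_ge0 ?mulr_ge0 ?ler0n //.
  apply: ler_pM; rewrite ?ler0n // -natrX ler_nat.
  apply: leq_trans (card_span (Mx K s) (head 0 s)).
  by rewrite cardE /= -cardE; apply: subset_leq_card; apply/subsetP => x; rewrite !inE.
apply: le_trans (_ : \sum_(x | ~~ (x - head 0 s <= Mx K s)%MS) P x * a ^+ r.+1 <= _).
  apply: ler_sum => x nx; apply: ler_pM => //; first exact: exprn_ge0.
  apply: ler_wiXn2l => //; have [le xle] := Mx_sub x sK s0.
  rewrite (ltn_leqif (mxrank_leqif_sup le)); apply/negP => le2; move/negP: nx; apply.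
  exact: submx_trans xle le2.
rewrite -mulr_suml exprS -[X in _ <= X]mul1r.
apply: ler_pM; rewrite ?mulr_ge0 ?exprn_ge0 ?sumr_ge0 //.
rewrite -[X in _ <= X]P1 [X in _ <= X](bigID (fun x => (x - head 0 s <= Mx K s)%MS)) /=.
by rewrite lerDr sumr_ge0.
Qed.

Lemma T_bound K a rho : (forall x, P x <= rho) -> 0 <= a -> a <= 1 ->
  forall j s, s != [::] -> (size s + j <= K)%N ->
  Tf K a j s <= (rho * Q ^+ K + a) ^+ j * a ^+ \rank (Mx K s).
Proof.
move=> hr a0 a1; elim=> [|j IH] s s0 sK /=; first by rewrite expr0 mul1r.
apply: le_trans (_ : \sum_x P x * ((rho * Q ^+ K + a) ^+ j *
   a ^+ \rank (Mx K (rcons s x))) <= _).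
  apply: ler_sum => x _.


apply: (lemM2l (P0 x)); apply: IH.
    by case: s s0 sK.
  by rewrite size_rcons addSnnS.
have sK' : (size s < K)%N by apply: leq_trans sK; rewrite addnS ltnS leq_addr.
have c0 : 0 <= rho * Q ^+ K + a.
  apply: addr_ge0 => //; apply: mulr_ge0; last exact: exprn_ge0.
  exact: le_trans (hr 0).
under eq_bigr do rewrite mulrCA.
rewrite -mulr_sumr exprSr -mulrA; apply: lemM2l; first exact: exprn_ge0.

exact: T_step.
Qed.

Fixpoint Uf (C : {set 'rV[F]_n}) (j : nat) (s : seq 'rV[F]_n) : R :=
  match j with
  | 0 => (all (fun z => z - head 0 s \in C) s)%:R
  | j'.+1 => \sum_x P x * Uf C j' (rcons s x)
  end.

Lemma all_contm d K C s : C \in linear_codes F n d -> (size s <= K)%N ->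
  all (fun z => z - head 0 s \in C) s = contm C (Mx K s).
Proof.
move=> Cc sK; have [G [_ eC]] := code_gen Cc; rewrite eC contm_gen.
apply/allP/row_subP.
  move=> H i; rewrite rowK; case: ifP => ilt; last by rewrite sub0mx.
  by move: (H _ (mem_nth 0 ilt)); rewrite inE.
move=> H z zs; rewrite inE.
have iK : (index z s < K)%N by apply: leq_trans sK; rewrite index_mem.
by move: (H (Ordinal iK)); rewrite rowK /= index_mem zs nth_index.
Qed.


Lemma avg_U d m K a : (d + m = n)%N -> a = ((#|F| ^ m)%:R)^-1 ->
  forall j s, (size s + j <= K)%N ->
  (#|linear_codes F n d|%:R)^-1 * \sum_(C in linear_codes F n d) Uf C j s <= Tf K a j s.
Proof.
move=> dmn ea; elim=> [|j IH] s sK /=.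
  rewrite addn0 in sK.
  rewrite (eq_bigr (fun C => (contm C (Mx K s) : nat)%:R)); last first.
    by move=> C Cc; rewrite (all_contm Cc sK).
  rewrite -natr_sum -card_setsum.
  set N := #|linear_codes F n d|; set S := #|_|.
  have hK := codes_K (Mx K s) dmn; rewrite -/N -/S in hK.
  have a0 : 0 <= a by rewrite ea invr_ge0 ler0n.
  have [N0|Npos] := posnP N.
    by rewrite N0 invr0 mul0r exprn_ge0.
  have q1 : (1 < #|F|)%N := finNzRing_gt1 F.
  have Xpos : (0 : R) < (#|F| ^ (m * \rank (Mx K s)))%:R.
    by rewrite ltr0n expn_gt0 (ltnW q1).
  have -> : a ^+ \rank (Mx K s) = ((#|F| ^ (m * \rank (Mx K s)))%:R)^-1.
    by rewrite ea exprVn -natrX -expnM.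
  rewrite ler_pdivrMl ?ltr0n // ler_pdivlMr // -natrM ler_nat.
  exact: hK.
rewrite exchange_big /= mulr_sumr; apply: ler_sum => x _.
rewrite -mulr_sumr mulrCA; apply: lemM2l => //; apply: IH.
by rewrite size_rcons addSnnS.
Qed.


Lemma U_H C m (H : 'M[F]_(m, n)) : parity_check C H -> forall j x0 s,
  Uf C j (x0 :: s) = (all (fun z => H *m z^T == H *m x0^T) (x0 :: s))%:R
                     * (distr_HZ H P (H *m x0^T)) ^+ j.
Proof.
move=> [_ pc]; elim=> [|j IH] x0 s.
  rewrite /= expr0 mulr1; congr (_%:R); congr andb; last first.
    by apply: eq_all => z; rewrite pc linearB /= mulmxBr subr_eq0.
  by rewrite pc subrr linear0 mulmx0 !eqxx.
rewrite [Uf _ _ _]/=.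
set p := (fun z => H *m z^T == H *m x0^T).
have e x : all p (x0 :: rcons s x) = p x && all p (x0 :: s).
  by rewrite /= all_rcons andbCA.
rewrite (eq_bigr (fun x => P x * ((p x)%:R * (all p (x0 :: s))%:R *
    distr_HZ H P (H *m x0^T) ^+ j))); last first.
  by move=> x _; rewrite IH -/p e -natrM mulnb.
rewrite exprSr [X in _ = X]mulrCA [X in _ = _ * X]mulrC.
rewrite (eq_bigr (fun x => (all p (x0 :: s))%:R * distr_HZ H P (H *m x0^T) ^+ j *
   (P x * (p x)%:R))); last by move=> x _; ring.
have D : \sum_i P i * (p i)%:R = distr_HZ H P (H *m x0^T).
  rewrite /distr_HZ [RHS]big_mkcond; apply: eq_big => // x _.
  by rewrite /p; case: eqP; rewrite ?mulr1 ?mulr0.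
rewrite -mulr_sumr D; ring.
Qed.

Lemma pow_sum m (H : 'M[F]_(m, n)) k :
  \sum_y (distr_HZ H P y) ^+ k.+1 = \sum_x P x * (distr_HZ H P (H *m x^T)) ^+ k.
Proof.
have e y : distr_HZ H P y ^+ k.+1 =
    \sum_(x | H *m x^T == y) P x * distr_HZ H P y ^+ k.
  by rewrite exprS {1}/distr_HZ mulr_suml.
rewrite (eq_bigr _ (fun y _ => e y)).
rewrite [RHS](partition_big (fun x => H *m x^T) xpredT) //=.
apply: eq_bigr => y _; apply: eq_big => [x //|x /eqP ->] //.
Qed.

Lemma sup_pow (T : finType) (f : T -> R) k : (0 < k)%N ->
  sup_norm f ^+ k <= \sum_t `|f t| ^+ k.
Proof.
move=> k0; set S := \sum_t _.
have S0 : 0 <= S by apply: sumr_ge0 => t _; rewrite exprn_ge0.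
suff : 0 <= sup_norm f /\ sup_norm f ^+ k <= S by case.
rewrite /sup_norm; apply: (big_ind (fun M => 0 <= M /\ M ^+ k <= S)).
- by rewrite expr0n; move: k0; rewrite lt0n => /negPf ->.
- move=> x y [x0 xk] [y0 yk]; rewrite maxEle; by case: ifP.
- move=> t _; split => //; rewrite /S (bigD1 t) //= lerDl sumr_ge0 // => i _.
  exact: exprn_ge0.
Qed.

End Prob.

Section Main.
Variables (R : realType) (F : finFieldType) (n : nat) (P : {ffun 'rV[F]_n -> R}).
Local Notation Q := (#|F|%:R : R).
Hypotheses (P0 : forall x, 0 <= P x) (P1 : \sum_x P x = 1).

Lemma distr_ge0 m (H : 'M[F]_(m, n)) y : 0 <= distr_HZ H P y.
Proof. by apply: sumr_ge0. Qed.

Lemma code_moment d m k (Hc : {set 'rV[F]_n} -> 'M[F]_(m, n)) rho :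
  (d + m = n)%N -> (0 < k)%N ->
  (forall C, C \in linear_codes F n d -> parity_check C (Hc C)) ->
  (forall x, P x <= rho) ->
  (#|linear_codes F n d|%:R)^-1 * \sum_(C in linear_codes F n d)
     (sup_norm (fun y => (#|F| ^ m)%:R * distr_HZ (Hc C) P y)) ^+ k
  <= ((#|F| ^ m)%:R) ^+ k * (rho * Q ^+ k + ((#|F| ^ m)%:R)^-1) ^+ k.-1.
Proof.
move=> dmn k0 hpc hr.
set a := ((#|F| ^ m)%:R : R)^-1.
have q1 : (1 < #|F|)%N := finNzRing_gt1 F.
have Qm1 : 1 <= ((#|F| ^ m)%:R : R) by rewrite ler1n expn_gt0 ltnW.
have a0 : 0 <= a by rewrite invr_ge0 ler0n.
have a1 : a <= 1 by rewrite invf_le1 // (lt_le_trans ltr01).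
case: k k0 => // k _ /=.
apply: le_trans (_ : (#|linear_codes F n d|%:R)^-1 * \sum_(C in linear_codes F n d)
   ((#|F| ^ m)%:R ^+ k.+1 * \sum_x0 P x0 * Uf P C k [:: x0]) <= _).
  apply: lemM2l; first by rewrite invr_ge0 ler0n.
  apply: ler_sum => C Cc.
  apply: le_trans (sup_pow _ (ltn0Sn k)) _.
  have -> : \sum_x0 P x0 * Uf P C k [:: x0] = \sum_y distr_HZ (Hc C) P y ^+ k.+1.
    rewrite pow_sum; apply: eq_bigr => x _; rewrite (U_H P (hpc C Cc)) /= eqxx /=.
    by rewrite mul1r.
  rewrite mulr_sumr; apply: ler_sum => y _.
  by rewrite normrM exprMn ger0_norm ?ler0n // ger0_norm // distr_ge0.
rewrite -mulr_sumr mulrCA; apply: lemM2l; first by rewrite exprn_ge0 ?ler0n.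
rewrite exchange_big /= mulr_sumr.
apply: le_trans (_ : \sum_x0 P x0 * Tf P k.+1 a k [:: x0] <= _).
  apply: ler_sum => x _; rewrite -mulr_sumr mulrCA; apply: lemM2l => //.
  exact: (avg_U P0 (K:=k.+1) (j:=k) (s:=[:: x]) dmn (erefl a) (leqnn _)).
apply: le_trans (_ : \sum_x0 P x0 * (rho * Q ^+ k.+1 + a) ^+ k <= _).
  apply: ler_sum => x _; apply: lemM2l => //.
  apply: le_trans (T_bound P0 P1 hr a0 a1 (j:=k) (s:=[:: x]) _ _) _ => //.
  rewrite -[X in _ <= X]mulr1; apply: lemM2l; last exact: exprn_ile1.
  apply: exprn_ge0; apply: addr_ge0 => //; apply: mulr_ge0; last exact: exprn_ge0.
  exact: le_trans (hr 0).
by rewrite -mulr_suml P1 mul1r.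
Qed.


Lemma sup_ge0 (T : finType) (f : T -> R) : 0 <= sup_norm f.
Proof.
rewrite /sup_norm; apply: (big_ind (fun x => 0 <= x)) => //.
by move=> x y x0 y0; rewrite le_max x0.
Qed.

End Main.

Lemma t_trick (R : realType) (x t : R) k : 0 <= x -> 0 < t ->
  x <= t + x ^+ k.+1 / t ^+ k.
Proof.
move=> x0 t0; have [xt|tx] := lerP x t.
  by apply: le_trans xt _; rewrite lerDl divr_ge0 ?exprn_ge0 // ltW.
apply: le_trans (_ : x ^+ k.+1 / t ^+ k <= _); last by rewrite lerDr ltW.
rewrite exprS -mulrA -expr_div_n -[X in X <= _]mulr1; apply: lemM2l => //.
by apply: exprn_ege1; rewrite ler_pdivlMr // mul1r ltW.
Qed.


End Aux.
Import Aux.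

Theorem proposition3p8 (R : realType) (F : finFieldType) (eps : R) :
  0 < eps ->
  exists C : R,
  forall (n : nat), (0 < n)%N ->
  forall (P : {ffun 'rV[F]_n -> R}), is_distr P ->
  forall (m : nat), (0 < m)%N ->
  ((m%:R : R)%:E <= min_entropy F P - (n%:R * eps)%:E)%E ->
  forall Hc : {set 'rV[F]_n} -> 'M[F]_(m, n),
  (forall Cd, Cd \in linear_codes F n (n - m) -> parity_check Cd (Hc Cd)) ->
  (#|linear_codes F n (n - m)|%:R)^-1 *
    \sum_(Cd in linear_codes F n (n - m))
      sup_norm (fun y : 'cV[F]_m => (#|F| ^ m)%:R * distr_HZ (Hc Cd) P y)
  <= C.
Proof.
move=> eps0.
set Q : R := #|F|%:R.
have q1 : (1 < #|F|)%N := finNzRing_gt1 F.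
have Q1 : 1 < Q by rewrite /Q ltr1n.
have Q0 : 0 < Q by apply: lt_trans Q1.
pose c := (Num.truncn (2 / eps)).+1.
have ce : 2 < c%:R * eps.
  by rewrite -ltr_pdivrMr // /c; apply: truncnS_gt.
exists (3 * Q ^+ c).
move=> n n0 P [P0 P1] m m0 hent Hc hpc.
set k0 := Num.truncn (n%:R * eps).
have ne0 : 0 <= n%:R * eps by rewrite mulr_ge0 // ltW.
have hk0 : k0%:R <= n%:R * eps by rewrite truncn_le.
have hk1 : n%:R * eps < k0.+1%:R by apply: truncnS_gt.
have Pb x : P x <= (Q ^+ (m + k0))^-1.
  have Qp : 0 < Q ^+ (m + k0) by rewrite exprn_gt0.
  have [Px0|] := ltrP 0 (P x); last first.
    by move=> h; apply: le_trans h _; rewrite invr_ge0 ltW.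
  have h1 : (min_entropy F P <= ((- ln (P x) / ln Q))%:E)%E.
    by rewrite /min_entropy; apply: bigmin_le_cond.
  have h2 : ((m%:R : R)%:E <= (- ln (P x) / ln Q - n%:R * eps)%:E)%E.
    by apply: le_trans hent _; rewrite EFinB; apply: leeB.
  rewrite lee_fin in h2.
  have lnQ : 0 < ln Q by apply: ln_gt0.
  have h3 : (m + k0)%:R * ln Q <= - ln (P x).
    rewrite -ler_pdivlMr // natrD; lra.
  rewrite -div1r ler_pdivlMr //.
  rewrite -(@ler_ln R) ?posrE ?mulr_gt0 // ln1 lnM ?posrE // lnXn //.
  rewrite -mulr_natr; lra.
have mn : (m + k0 <= n)%N.
  have : 1 <= (#|F| ^ n)%:R * (Q ^+ (m + k0))^-1.
    rewrite -[X in X <= _]P1; apply: le_trans (ler_sum _ (fun x _ => Pb x)) _.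
    rewrite sumr_const -mulr_natl mulrC card_mx mul1n.
    by rewrite mulr1 mulr_natr.
  rewrite -[_ * _^-1]/((_ / _)) ler_pdivlMr ?exprn_gt0 // mul1r natrX -/Q.
  by rewrite ler_eXn2l.
have dmn : ((n - m) + m = n)%N by rewrite subnK // (leq_trans (leq_addr k0 m) mn).
set codes := linear_codes F n (n - m).
set N := #|codes|.
have Qm : ((#|F| ^ m)%:R : R) = Q ^+ m by rewrite natrX.
have Xge0 Cd : 0 <= sup_norm (fun y : 'cV[F]_m => (#|F| ^ m)%:R * distr_HZ (Hc Cd) P y).
  exact: sup_ge0.
have N0 : 0 <= (N%:R : R)^-1 by rewrite invr_ge0 ler0n.
case Ek: k0 => [|k].
  have nc : (n < c)%N.
    rewrite -(ltr_nat R) -(ltr_pM2r eps0); rewrite Ek in hk1; lra.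
  have rho1 : forall x, P x <= 1.
    move=> x; apply: le_trans (Pb x) _; rewrite invf_le1 ?exprn_gt0 //.
    by rewrite exprn_ege1 // ltW.
  have h := code_moment P0 P1 (k:=1) dmn (ltn0Sn 0) hpc rho1.
  rewrite expr1 expr0 mulr1 in h.
  have e : \sum_(Cd in codes) sup_norm (fun y : 'cV[F]_m => (#|F| ^ m)%:R * distr_HZ (Hc Cd) P y) ^+ 1
    = \sum_(Cd in codes) sup_norm (fun y : 'cV[F]_m => (#|F| ^ m)%:R * distr_HZ (Hc Cd) P y).
    by apply: eq_bigr => Cd _; rewrite expr1.
  rewrite e in h; apply: le_trans h _.
  rewrite Qm; apply: le_trans (_ : Q ^+ c <= _).
    rewrite ler_eXn2l //; apply: ltnW; apply: leq_ltn_trans nc.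
    by apply: leq_trans (leq_addr k0 m) mn.
  rewrite ler_peMl ?exprn_ge0 ?ltW //; lra.
rewrite Ek in Pb mn hk0 hk1.
have mc : (m <= c * k.+1)%N.
  apply: leq_trans (leq_addr k.+1 m) _; apply: leq_trans mn _; apply: ltnW.
  rewrite -(ltr_nat R) -(ltr_pM2r eps0) natrM.
  have : (k.+2%:R : R) <= 2 * k.+1%:R by rewrite -natrM ler_nat mulSn mul1n addSn ltnS leq_addl.
  have : (0 : R) < k.+1%:R by rewrite ltr0n.
  nra.
have h := code_moment P0 P1 (k:=k.+1) dmn (ltn0Sn k) hpc Pb.
set t : R := 2 * Q ^+ c.
have t0 : 0 < t by rewrite mulr_gt0 ?exprn_gt0.
set X := fun Cd => sup_norm (fun y : 'cV[F]_m => (#|F| ^ m)%:R * distr_HZ (Hc Cd) P y).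
apply: le_trans (_ : (N%:R)^-1 * \sum_(Cd in codes) (t + X Cd ^+ k.+1 / t ^+ k) <= _).
  apply: lemM2l => //; apply: ler_sum => Cd _; exact: t_trick.
rewrite big_split /= mulrDr -mulr_suml mulrA.
have Bt : ((N%:R)^-1 * \sum_(i in codes) X i ^+ k.+1) / t ^+ k <= Q ^+ c.
  rewrite ler_pdivrMr ?exprn_gt0 //; apply: le_trans h _.
  rewrite Qm.
  have u0 : 0 < Q ^+ m by rewrite exprn_gt0.
  have e1 : Q ^- (m + k.+1) * Q ^+ k.+1 = (Q ^+ m)^-1.
    by rewrite exprD invfM -mulrA mulVf ?mulr1 // gt_eqF // exprn_gt0.
  rewrite e1 /=.
  set u := Q ^+ m.
  have e2 : u ^+ k * u^-1 ^+ k = 1 by rewrite -exprMn mulfV ?expr1n // gt_eqF.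
  have -> : u ^+ k.+1 * (u^-1 + u^-1) ^+ k = u * 2 ^+ k * (u ^+ k * u^-1 ^+ k).
    have e3 : u^-1 + u^-1 = 2 * u^-1 by ring.
    by rewrite e3 exprMn exprS; ring.
  rewrite e2 mulr1 /t exprMn.
  have -> : Q ^+ c * (2 ^+ k * Q ^+ c ^+ k) = (Q ^+ c) ^+ k.+1 * 2 ^+ k.
    by rewrite exprS; ring.
  apply: ler_pM; rewrite ?exprn_ge0 ?(ltW Q0) //.
  by rewrite /u -exprM ler_eXn2l // mulnC.
have Nt : (N%:R)^-1 * (\sum_(i in codes) 2) * Q ^+ c <= t.
  rewrite sumr_const -/N -[2 *+ N]mulr_natr.
  have [->|Np] := posnP N; first by rewrite invr0 !mul0r ltW.
  rewrite mulrCA.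
  have -> : (N%:R : R)^-1 * N%:R = 1 by apply: mulVf; rewrite pnatr_eq0 -lt0n.
  by rewrite mulr1.
have Bt' : (N%:R)^-1 * \sum_(i in codes) X i ^+ k.+1 / t ^+ k <= Q ^+ c.
  by rewrite -mulr_suml mulrA.
apply: le_trans (lerD Nt Bt') _.
rewrite /t; lra.
Qed.
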